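(* For every $h\in[H]$, with $\kappa=1/K$ and some $\beta=O(L/K)$, there is a matrix $A\in\mathbb R^{|\mathcal M|\times|\mathcal M|}$ (indexed by models) with $\frac1K\mathcal E_B(M,M',h)\le A(M,M')\le\mathcal W_F(M,M',h)$ for all $M,M'\in\mathcal M$ and $\mathrm{rank}(A,\beta)\le L_h/|\mathcal O|$; that is, the witness rank defined with $\mathcal W_F$ satisfies $\mathsf W(1/K,\beta,\mathcal M,\mathcal F,h)\le L_h/|\mathcal O|$.
   Context: Factored MDP setting: $\mathcal O$ finite, $\mathcal X=[H]\times\mathcal O^d$ layered by time, $|\mathcal A|=K$; known parent sets $\mathrm{pa}_i\subseteq[d]$; transitions $P(x'|x,a)=\prod_{i=1}^dP^{(i)}[x'[i]\mid x[\mathrm{pa}_i],a,h]$; known reward $R^\star$ shared by all models, rewards in $[0,1]$ with total reward $\le1$; $\mathcal M$ is the set of all models with reward $R^\star$ and transitions factorizing with these parents, true model $M^\star\in\mathcal M$. $L=\sum_{i=1}^dHK|\mathcal O|^{1+|\mathrm{pa}_i|}$, $L_h=\sum_{i=1}^dK|\mathcal O|^{1+|\mathrm{pa}_i|}$. For model $M$: $V_M,\pi_M$ its optimal value function and greedy policy; $x_h\sim\pi$ the step-$h$ context running $\pi$ in the true MDP; $(r,x')\sim M_h$: $r\sim R^\star(x_h,a_h),x'\sim P(x_h,a_h)$. $\mathcal E_B(M,M',h)=\mathbb E_{x_h\sim\pi_M,a_h\sim\pi_{M'}}[\mathbb E_{M'_h}[r+V_{M'}(x')]-\mathbb E_{M^\star_h}[r+V_{M'}(x')]]$.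 $\mathcal F=\{g_1+\dots+g_d:g_i\in\mathcal G_i\}$, $\mathcal G_i$ all $\{-1,1\}$-valued functions of $(x,a,r,x')$ depending only on $(x[\mathrm{pa}_i],a,h,x'[i])$. $\mathcal W_F(M,M',h)=\max_{f\in\mathcal F}\mathbb E_{x_h\sim\pi_M,a_h\sim U(\mathcal A)}[\mathbb E_{M'_h}f-\mathbb E_{M^\star_h}f]$. For a matrix $B$, $\mathrm{rank}(B,\beta)$ is the least $k$ with $B=UV^\top$, $U,V$ having $k$ columns and $\|u_i\|_2\|v_j\|_2\le\beta$ for all rows $u_i,v_j$. *)

(* Defs.v *)
From mathcomp Require Import all_boot all_order all_algebra.
Set Implicit Arguments. Unset Strict Implicit. Unset Printing Implicit Defensive.
Import Order.TTheory GRing.Theory Num.Theory.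
Local Open Scope ring_scope.

Notation obs O d := {ffun 'I_d -> O}.

Section FMDP.
Variables (R : rcfType) (O Act : finType) (H d : nat).

(* A transition model: M h i x a o = P^(i)[ x'[i] = o | x, a, h ]
   (dependence on x only through x[pa_i] is imposed by [is_model]). *)
Definition model := 'I_H -> 'I_d -> obs O d -> Act -> O -> R.

Definition policy := 'I_H -> obs O d -> Act.

Variable pa : 'I_d -> {set 'I_d}.

Definition agree_on (i : 'I_d) (x x' : obs O d) : bool :=
  [forall j in pa i, x j == x' j].

Definition is_model (M : model) : Prop :=
  (forall h i x a o, 0 <= M h i x a o) /\
  (forall h i x a, \sum_(o : O) M h i x a o = 1) /\
  (forall h i x x' a o, agree_on i x x' -> M h i x a o = M h i x' a o).

Definition K : nat := #|Act|.
Definition L : nat := (\sum_(i < d) H * K * #|O| ^ (1 + #|pa i|))%N.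
Definition Lh : nat := (\sum_(i < d) K * #|O| ^ (1 + #|pa i|))%N.

(* known reward (mean reward R*(x,a)), shared by all models *)
Variable Rs : 'I_H -> obs O d -> Act -> R.

Definition reward_ok : Prop :=
  (forall h x a, 0 <= Rs h x a <= 1) /\
  (forall (xs : 'I_H -> obs O d) (acts : 'I_H -> Act),
      \sum_(h < H) Rs h (xs h) (acts h) <= 1).

Definition Pfull (M : model) (h : 'I_H) (x : obs O d) (a : Act) (y : obs O d) : R :=
  \prod_(i < d) M h i x a (y i).

(* optimal value, by backward induction; layer H is terminal (value 0) *)
Fixpoint Vaux (M : model) (f h : nat) (x : obs O d) : R :=
  match f with
  | 0 => 0
  | f'.+1 =>
    match insub h : option 'I_H with
    | Some hh => \big[Num.max/0]_(a : Act)
                   (Rs hh x a + \sum_(y : obs O d) Pfull M hh x a y * Vaux M f' h.+1 y)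
    | None => 0
    end
  end.

Definition V (M : model) (h : nat) (x : obs O d) : R := Vaux M (H - h) h x.

Definition Q (M : model) (h : 'I_H) (x : obs O d) (a : Act) : R :=
  Rs h x a + \sum_(y : obs O d) Pfull M h x a y * V M h.+1 y.

Definition greedy (pi : model -> policy) : Prop :=
  forall M, is_model M -> forall h x a, Q M h x a <= Q M h x (pi M h x).

Variables (Mstar : model) (d0 : obs O d -> R).

Definition init_ok : Prop :=
  (forall x, 0 <= d0 x) /\ \sum_(x : obs O d) d0 x = 1.

Fixpoint rollin (p : policy) (n : nat) (y : obs O d) : R :=
  match n with
  | 0 => d0 y
  | n'.+1 =>
    match insub n' : option 'I_H with
    | Some hh => \sum_(x : obs O d) rollin p n' x * Pfull Mstar hh x (p hh x) y
    | None => 0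
    end
  end.

Variable pi : model -> policy.

Definition EB (M M' : model) (h : 'I_H) : R :=
  \sum_(x : obs O d) rollin (pi M) h x *
    (let a := pi M' h x in
     (Rs h x a + \sum_(y : obs O d) Pfull M' h x a y * V M' h.+1 y)
     - (Rs h x a + \sum_(y : obs O d) Pfull Mstar h x a y * V M' h.+1 y)).

(* the class F: f = g_1 + ... + g_d, g_i {-1,1}-valued (encoded by bool),
   g_i a function of (h, x, a, x'[i]) depending on x only through x[pa_i] *)
Definition gfam := {ffun 'I_d -> {ffun ('I_H * obs O d * Act * O) -> bool}}.

Definition inF (g : gfam) : bool :=
  [forall i : 'I_d, forall h : 'I_H, forall x : obs O d, forall x' : obs O d,
     forall a : Act, forall o : O,
       agree_on i x x' ==> (g i (h, x, a, o) == g i (h, x', a, o))].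

Definition fval (g : gfam) (h : 'I_H) (x : obs O d) (a : Act) (y : obs O d) : R :=
  \sum_(i < d) (if g i (h, x, a, y i) then 1 else -1).

Definition gconst : gfam := [ffun _ => [ffun _ => true]].

Definition Ef (M M' : model) (h : 'I_H) (g : gfam) : R :=
  \sum_(x : obs O d) rollin (pi M) h x *
    ((K%:R)^-1 * \sum_(a : Act)
       (\sum_(y : obs O d) Pfull M' h x a y * fval g h x a y
        - \sum_(y : obs O d) Pfull Mstar h x a y * fval g h x a y)).

(* W_F(M, M', h) = max over f in F (gconst is in F, so it is a max over F) *)
Definition WF (M M' : model) (h : 'I_H) : R :=
  \big[Num.max/Ef M M' h gconst]_(g | inF g) Ef M M' h g.

End FMDP.

Definition rank_le (R : rcfType) (T : Type) (P : T -> Prop) (A : T -> T -> R)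
    (beta : R) (k : nat) : Prop :=
  exists k' : nat, (k' <= k)%N /\
  exists (U W : T -> 'I_k' -> R),
    (forall M M', P M -> P M' -> A M M' = \sum_(j < k') U M j * W M' j) /\
    (forall M M', P M -> P M' ->
       Num.sqrt (\sum_(j < k') U M j ^+ 2) * Num.sqrt (\sum_(j < k') W M' j ^+ 2)
       <= beta).

(* Main.v *)
Require Import Defs.
From mathcomp Require Import all_boot all_order all_algebra.
From mathcomp Require Import zify ring lra.
Import Order.TTheory GRing.Theory Num.Theory.
Local Open Scope ring_scope.

Section Helpers.
Variables (R : rcfType) (O : finType) (d : nat).

Lemma sum_prod (a : 'I_d -> O -> R) :
  \sum_(y : {ffun 'I_d -> O}) \prod_k a k (y k) = \prod_k \sum_o a k o.
Proof. by rewrite bigA_distr_bigA. Qed.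

Lemma marginal (a : 'I_d -> O -> R) (f : O -> R) (i : 'I_d) :
  (forall k, \sum_o a k o = 1) ->
  \sum_(y : {ffun 'I_d -> O}) (\prod_k a k (y k)) * f (y i) = \sum_o a i o * f o.
Proof.
move=> H1.
pose G (k : 'I_d) (o : O) := if k == i then a k o * f o else a k o.
transitivity (\sum_(y : {ffun 'I_d -> O}) \prod_k G k (y k)).
  apply: eq_bigr => y _.
  rewrite (bigD1 i) //= [RHS](bigD1 i) //=. rewrite /G /= eqxx mulrAC; congr (_ * _).
  by apply: eq_bigr => k /negbTE ->.
rewrite sum_prod (bigD1 i) //= [X in _ * X]big1 ?mulr1; first by apply: eq_bigr => o _; rewrite /G /= eqxx.
by move=> k /negbTE nk; rewrite /G nk H1.
Qed.

Lemma prod_l1 (a b : 'I_d -> O -> R) :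
  (forall k o, 0 <= a k o) -> (forall k o, 0 <= b k o) ->
  (forall k, \sum_o a k o = 1) -> (forall k, \sum_o b k o = 1) ->
  \sum_(y : {ffun 'I_d -> O}) `|\prod_k a k (y k) - \prod_k b k (y k)|
    <= \sum_k \sum_o `|a k o - b k o|.
Proof.
move=> a0 b0 a1 b1.
pose c (y : {ffun 'I_d -> O}) (n : nat) :=
  \prod_(k < d) (if (k < n)%N then b k (y k) else a k (y k)).
have E (y : {ffun 'I_d -> O}) : \prod_k a k (y k) - \prod_k b k (y k) = \sum_(k < d) (c y k - c y k.+1).
  rewrite -(big_mkord xpredT (fun k => c y k - c y k.+1)).
  transitivity (- \sum_(0 <= k < d) (c y k.+1 - c y k)).
    rewrite telescope_sumr // opprB; congr (_ - _); apply: eq_bigr => k _ //.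
    by rewrite ltn_ord.
  by rewrite -sumrN; apply: eq_bigr => k _; rewrite opprB.
pose G (k j : 'I_d) (o : O) :=
  if j == k then `|a k o - b k o| else if (j < k)%N then b j o else a j o.
have D (y : {ffun 'I_d -> O}) (k : 'I_d) : `|c y k - c y k.+1| = \prod_j G k j (y j).
  rewrite /c (bigD1 k) //= [X in _ - X](bigD1 k) //= ltnn ltnSn.
  have -> : \prod_(i < d | i != k) (if (i < k.+1)%N then b i (y i) else a i (y i))
     = \prod_(i < d | i != k) (if (i < k)%N then b i (y i) else a i (y i)).
    apply: eq_bigr => j jk; rewrite ltnS leq_eqVlt.
    by have /negbTE -> : (j : nat) != k by exact: jk.
  rewrite -mulrBl [RHS](bigD1 k) //= /G eqxx normrM; congr (_ * _).
  rewrite ger0_norm; last by apply: prodr_ge0 => j _; case: ifP.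
  by apply: eq_bigr => j jk; rewrite (negbTE jk).
under eq_bigr do rewrite E.
apply: le_trans; first by apply: ler_sum => y _; apply: ler_norm_sum.
rewrite exchange_big /=; apply: ler_sum => k _.
under eq_bigr do rewrite D.
rewrite sum_prod (bigD1 k) //= [X in _ * X]big1 ?mulr1; last first.
  move=> j jk; rewrite (eq_bigr (fun o => if (j < k)%N then b j o else a j o)); last by move=> o _; rewrite /G (negbTE jk).
  by case: (j < k)%N; [exact: b1 | exact: a1].
by apply: ler_sum => o _; rewrite /G /= eqxx.
Qed.

End Helpers.
Arguments sum_prod {R O d} a.
Arguments marginal {R O d} a f i _.
Arguments prod_l1 {R O d} a b _ _ _ _.

Lemma bigmax_ge0 (R : rcfType) (I : Type) (r : seq I) (P : pred I) (F : I -> R) :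
  0 <= \big[Num.max/0]_(i <- r | P i) F i.
Proof.
elim: r => [|a r IH]; first by rewrite big_nil.
rewrite big_cons; case: ifP => // _; by rewrite le_max IH orbT.
Qed.

Lemma bigmax_ge (R : rcfType) (T : finType) (P : pred T) (F : T -> R) x0 (t : T) :
  P t -> F t <= \big[Num.max/x0]_(g | P g) F g.
Proof.
move=> Pt; have : t \in index_enum T by exact: mem_index_enum.
elim: (index_enum T) => [|a r IH] //; rewrite inE big_cons => /orP [/eqP <-|tr].
  by rewrite Pt le_max lexx.
case: ifP => _; last exact: IH.
by rewrite le_max IH ?orbT.
Qed.

Lemma bigmax_le (R : rcfType) (I : Type) (r : seq I) (P : pred I) (F : I -> R) (c : R) :
  0 <= c -> (forall i, P i -> F i <= c) -> \big[Num.max/0]_(i <- r | P i) F i <= c.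
Proof.
move=> c0 Fc; apply: (big_ind (fun x => x <= c)) => // x y xc yc.
by rewrite ge_max xc yc.
Qed.

Lemma sum_cond_le (R : rcfType) (T : finType) (P : pred T) (F : T -> R) :
  (forall i, 0 <= F i) -> \sum_(i | P i) F i <= \sum_i F i.
Proof.
move=> F0; rewrite [X in _ <= X](bigID P) /= lerDl; exact: sumr_ge0.
Qed.

Lemma term_le_sum (R : rcfType) (T : finType) (F : T -> R) (t : T) :
  (forall i, 0 <= F i) -> F t <= \sum_i F i.
Proof.
move=> F0; rewrite (bigD1 t) //= lerDl; exact: sumr_ge0.
Qed.

Section MDP.
Variables (R : rcfType) (O Act : finType) (H d : nat) (pa : 'I_d -> {set 'I_d}).
Variables (Rs : 'I_H -> obs O d -> Act -> R) (Mstar : model R O Act H d).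
Variables (d0 : obs O d -> R) (pi : model R O Act H d -> policy O Act H d).
Implicit Types (M : model R O Act H d) (h : 'I_H) (x y : obs O d) (a : Act).

Lemma Pfull_ge0 M h x a y : is_model pa M -> 0 <= Pfull M h x a y.
Proof. by case=> M0 _; apply: prodr_ge0 => i _. Qed.

Lemma Pfull_sum1 M h x a : is_model pa M -> \sum_y Pfull M h x a y = 1.
Proof.
case=> _ [M1 _]; rewrite /Pfull.
rewrite (sum_prod (fun i o => M h i x a o)); exact: big1.
Qed.

Lemma Vaux_ge0 M f (hn : nat) x : 0 <= Vaux Rs M f hn x.
Proof.
case: f => [|f] //=; case: (insub hn) => [hh|] //; exact: bigmax_ge0.
Qed.

Lemma V_ge0 M (hn : nat) x : 0 <= V Rs M hn x.
Proof. exact: Vaux_ge0. Qed.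

Lemma S_le1 (hn : nat) (xs : 'I_H -> obs O d) (acts : 'I_H -> Act) :
  reward_ok Rs -> 0 <= 1 - \sum_(k < H | (k < hn)%N) Rs k (xs k) (acts k).
Proof.
case=> R01 R1; rewrite subr_ge0; apply: le_trans (R1 xs acts).
by apply: sum_cond_le => i; case/andP: (R01 i (xs i) (acts i)).
Qed.

Lemma V_le1 M : reward_ok Rs -> is_model pa M ->
  forall n (hn : nat) x (xs : 'I_H -> obs O d) (acts : 'I_H -> Act), (hn + n = H)%N ->
  V Rs M hn x <= 1 - \sum_(k < H | (k < hn)%N) Rs k (xs k) (acts k).
Proof.
move=> Rok Mm; elim=> [|n IH] hn x xs acts hnH.
  rewrite /V (_ : (H - hn = 0)%N) /=; last by lia.
  exact: S_le1.
have hlt : (hn < H)%N by lia.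
rewrite /V (_ : (H - hn = n.+1)%N); last by lia.
rewrite /= (insubT (fun k => k < H)%N hlt).
apply: bigmax_le; first exact: S_le1.
move=> a _.
set hh : 'I_H := Sub hn hlt.
pose xs' k := if k == hh then x else xs k.
pose acts' k := if k == hh then a else acts k.
have ES : \sum_(k < H | (k < hn.+1)%N) Rs k (xs' k) (acts' k)
   = Rs hh x a + \sum_(k < H | (k < hn)%N) Rs k (xs k) (acts k).
  rewrite (bigD1 hh) /=; last by rewrite /hh /= ltnSn.
  rewrite /xs' /acts' eqxx; congr (_ + _).
  apply: eq_big => k.
    rewrite ltnS leq_eqVlt.
    have -> : (k == hh) = (nat_of_ord k == hn) by [].
    by case: eqP => [->|]; rewrite ?ltnn ?andbT ?andbF.
  by move=> /andP [_ /negbTE ->].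
have Vb y : Vaux Rs M n hn.+1 y <= 1 - (Rs hh x a + \sum_(k < H | (k < hn)%N) Rs k (xs k) (acts k)).
  have := IH hn.+1 y xs' acts'; rewrite /V ES (_ : (H - hn.+1 = n)%N); last by lia.
  by apply; lia.
apply: (le_trans (lerD (lexx _) (_ : _ <= \sum_y Pfull M hh x a y *
   (1 - (Rs hh x a + \sum_(k < H | (k < hn)%N) Rs k (xs k) (acts k)))))).
  by apply: ler_sum => y _; apply: ler_wpM2l; [exact: Pfull_ge0 | exact: Vb].
by rewrite -mulr_suml Pfull_sum1 // mul1r addrC opprD addrA addrAC subrK.
Qed.

Lemma rollin_ge0 : init_ok d0 -> is_model pa Mstar ->
  forall p n y, 0 <= rollin Mstar d0 p n y.
Proof.
move=> [d00 _] Mm p; elim=> [|n IH] y /=; first exact: d00.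
case: (insub n) => [hh|] //.
by apply: sumr_ge0 => x _; apply: mulr_ge0 => //; exact: Pfull_ge0.
Qed.

Lemma rollin_le1 : init_ok d0 -> is_model pa Mstar ->
  forall p n, \sum_y rollin Mstar d0 p n y <= 1.
Proof.
move=> [d00 d01] Mm p; elim=> [|n IH] /=; first by rewrite d01.
case: (insub n) => [hh|]; last by rewrite big1 ?ler01.
rewrite exchange_big /=.
under eq_bigr do rewrite -mulr_sumr Pfull_sum1 // mulr1.
exact: IH.
Qed.

Definition Dd M' h i x a := \sum_o `|M' h i x a o - Mstar h i x a o|.
Definition Afun h M M' := \sum_x rollin Mstar d0 (pi M) h x *
   ((K Act)%:R^-1 * \sum_a \sum_i Dd M' h i x a).

Lemma Dd_ge0 M' h i x a : 0 <= Dd M' h i x a.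
Proof. by apply: sumr_ge0 => o _. Qed.

Lemma EB_le h M M' : reward_ok Rs -> init_ok d0 -> is_model pa Mstar ->
  is_model pa M' ->
  (K Act)%:R^-1 * EB Rs Mstar d0 pi M M' h <= Afun h M M'.
Proof.
move=> Rok Iok Ms M'm.
rewrite /EB /Afun mulr_sumr; apply: ler_sum => x _.
rewrite mulrCA; apply: ler_wpM2l; first exact: rollin_ge0.
apply: ler_wpM2l; first by rewrite invr_ge0 ler0n.
set a0 := pi M' h x.
have -> : forall u v w : R, u + v - (u + w) = v - w.
  by move=> u v w; rewrite opprD addrACA subrr add0r.
rewrite -sumrB.
apply: (le_trans (_ : _ <= \sum_i Dd M' h i x a0)); last first.
  by apply: (@term_le_sum _ _ (fun a => \sum_i Dd M' h i x a) a0) => a; apply: sumr_ge0 => i _; exact: Dd_ge0.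
have M'm' := M'm; have Ms' := Ms.
case: M'm' => M'0 [M'1 _]; case: Ms' => Ms0 [Ms1 _].
apply: le_trans (prod_l1 (fun i o => M' h i x a0 o) (fun i o => Mstar h i x a0 o) _ _ _ _) => //.
apply: ler_sum => y _; rewrite -mulrBl; apply: le_trans (ler_norm _) _.
rewrite normrM; apply: ler_piMr => //.
rewrite ger0_norm; last exact: V_ge0.
have hlt := ltn_ord h.
apply: le_trans (V_le1 M' Rok M'm (H - h.+1)%N h.+1 y (fun _ => y) (fun _ => a0) _) _.
  by lia.
by rewrite gerBl; apply: sumr_ge0 => k _; case/andP: ((Rok.1) k y a0).
Qed.

Definition gstar M' : gfam O Act H d :=
  [ffun i => [ffun p : 'I_H * obs O d * Act * O =>
     (Mstar p.1.1.1 i p.1.1.2 p.1.2 p.2 <= M' p.1.1.1 i p.1.1.2 p.1.2 p.2)]].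

Lemma gstar_inF M' : is_model pa M' -> is_model pa Mstar -> inF pa (gstar M').
Proof.
move=> [_ [_ M'3]] [_ [_ Ms3]].
apply/forallP => i; apply/forallP => hh; apply/forallP => x; apply/forallP => x'.
apply/forallP => a; apply/forallP => o; apply/implyP => ag.
by rewrite !ffunE /= (M'3 _ _ _ _ _ _ ag) (Ms3 _ _ _ _ _ _ ag).
Qed.

Lemma Ef_gstar M M' h : is_model pa M' -> is_model pa Mstar ->
  Ef Mstar d0 pi M M' h (gstar M') = Afun h M M'.
Proof.
move=> M'm Msm.
rewrite /Ef /Afun; apply: eq_bigr => x _; congr (_ * (_ * _)); apply: eq_bigr => a _.
have E (N : model R O Act H d) : is_model pa N ->
   \sum_y Pfull N h x a y * fval R (gstar M') h x a y
   = \sum_i \sum_o N h i x a o * (if Mstar h i x a o <= M' h i x a o then 1 else -1).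
  case=> _ [N1 _]; rewrite /fval.
  under eq_bigr do rewrite mulr_sumr.
  rewrite exchange_big /=; apply: eq_bigr => i _.
  rewrite -(marginal (fun k o => N h k x a o) (fun o => if Mstar h i x a o <= M' h i x a o then 1 else -1) i) //.
  by apply: eq_bigr => y _; rewrite !ffunE.
rewrite !E // -sumrB; apply: eq_bigr => i _; rewrite -sumrB /Dd; apply: eq_bigr => o _.
rewrite -mulrBl; case: ifP => [le|/negbT lt]; rewrite ?mulr1 ?mulrN1.
  by rewrite ger0_norm // subr_ge0.
by rewrite ltr0_norm // subr_lt0 ltNge.
Qed.

Lemma Afun_le_WF M M' h : is_model pa M' -> is_model pa Mstar ->
  Afun h M M' <= WF pa Mstar d0 pi M M' h.
Proof.
move=> M'm Msm; rewrite -Ef_gstar //.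
rewrite /WF. apply: bigmax_ge. exact: gstar_inF.
Qed.

Definition Jt : finType := {i : 'I_d & ({ffun {j : 'I_d | j \in pa i} -> O} * Act)%type}.

Definition res (i : 'I_d) (x : obs O d) : {ffun {j : 'I_d | j \in pa i} -> O} :=
  [ffun j => x (val j)].

Lemma res_agree i x x' : res i x = res i x' -> agree_on pa i x x'.
Proof.
move=> e; apply/forallP => j; apply/implyP => jp.
move/ffunP: e => /(_ (Sub j jp)); rewrite !ffunE /= => ->; exact: eqxx.
Qed.

Lemma card_Jt : #|Jt| = (\sum_(i < d) #|O| ^ #|pa i| * #|Act|)%N.
Proof.
rewrite /Jt card_tagged sumnE big_map big_enum /=.
apply: eq_bigr => i _; rewrite card_prod card_ffun card_sig; congr (_ ^ _ * _)%N.
Qed.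

Definition Ub h M (i : 'I_d) (u : {ffun {j : 'I_d | j \in pa i} -> O}) : R :=
  \sum_(x | res i x == u) rollin Mstar d0 (pi M) h x.

Definition Wb h M' (i : 'I_d) (u : {ffun {j : 'I_d | j \in pa i} -> O}) a : R :=
  match [pick x | res i x == u] with
  | Some x => (K Act)%:R^-1 * Dd M' h i x a
  | None => 0
  end.

Lemma Dd_agree M' h i x x' a : is_model pa M' -> is_model pa Mstar ->
  agree_on pa i x x' -> Dd M' h i x a = Dd M' h i x' a.
Proof.
move=> [_ [_ M'3]] [_ [_ Ms3]] ag; apply: eq_bigr => o _.
by rewrite (M'3 _ _ _ _ _ _ ag) (Ms3 _ _ _ _ _ _ ag).
Qed.

Lemma Afun_decomp h M M' : is_model pa M' -> is_model pa Mstar ->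
  Afun h M M' = \sum_i \sum_u \sum_a Ub h M i u * Wb h M' i u a.
Proof.
move=> M'm Msm; rewrite /Afun.
transitivity (\sum_x \sum_a \sum_i rollin Mstar d0 (pi M) h x * ((K Act)%:R^-1 * Dd M' h i x a)).
  apply: eq_bigr => x _; rewrite !mulr_sumr.
  by apply: eq_bigr => a _; rewrite !mulr_sumr.
rewrite exchange_big /=.
under eq_bigr do rewrite exchange_big /=.
rewrite exchange_big /=.
apply: eq_bigr => i _.
rewrite [RHS]exchange_big /=.
apply: eq_bigr => a _.
rewrite (partition_big (res i) xpredT) //=.
apply: eq_bigr => u _.
rewrite /Ub mulr_suml; apply: eq_bigr => x /eqP ex.
congr (_ * _); rewrite /Wb; case: pickP => [x0 /eqP e0 | none]; last first.
  by have := none x; rewrite ex eqxx.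
congr (_ * _); apply: Dd_agree => //; apply: res_agree; by rewrite ex e0.
Qed.

Lemma Afun_rank h : init_ok d0 -> is_model pa Mstar -> (0 < #|Act|)%N ->
  rank_le (is_model pa) (Afun h) (2%:R * ((L O Act H pa)%:R / (K Act)%:R))
    (Lh O Act pa %/ #|O|).
Proof.
move=> Iok Msm Kp.
have Kp' : (0:R) < (K Act)%:R by rewrite ltr0n.
have b0 : (0:R) <= 2%:R * ((L O Act H pa)%:R / (K Act)%:R).
  by apply: mulr_ge0 => //; apply: divr_ge0.
have [O0|Op] := posnP #|O|.
  exists 0%N; split => //; exists (fun _ _ => 0), (fun _ _ => 0); split.
    move=> M M' _ _; rewrite big_ord0 /Afun big1 // => x _.
    rewrite [X in _ * (_ * X)]big1 ?mulr0 // => a _; rewrite big1 // => i _.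
    by rewrite /Dd big1 // => o _; have := card0_eq O0 o; rewrite inE.
  by move=> M M' _ _; rewrite !big_ord0 sqrtr0 mul0r.
pose U M (j : 'I_#|Jt|) := Ub h M (tag (enum_val j)) (tagged (enum_val j)).1.
pose W M' (j : 'I_#|Jt|) :=
  Wb h M' (tag (enum_val j)) (tagged (enum_val j)).1 (tagged (enum_val j)).2.
exists #|Jt|; split.
  rewrite card_Jt /Lh [X in (_ <= X %/ _)%N](eq_bigr (fun i => #|O| * (K Act * #|O| ^ #|pa i|)))%N; last first.
    by move=> i _; rewrite add1n expnS mulnCA.
  rewrite -big_distrr /= mulKn //; apply: leq_sum => i _; by rewrite mulnC.
exists U, W; split.
  move=> M M' _ M'm.
  rewrite Afun_decomp //; symmetry.
  transitivity (\sum_(t in Jt) Ub h M (tag t) (tagged t).1 *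
                 Wb h M' (tag t) (tagged t).1 (tagged t).2).
    by rewrite [RHS]big_enum_val.
  transitivity (\sum_i \sum_(p : ({ffun {j : 'I_d | j \in pa i} -> O} * Act)%type)
                   Ub h M i p.1 * Wb h M' i p.1 p.2).
    by rewrite (sig_big_dep xpredT (fun _ _ => true)) /=; apply: eq_bigl => t.
  by apply: eq_bigr => i _; rewrite (pair_bigA _ (fun u a => Ub h M i u * Wb h M' i u a)).
move=> M M' Mm M'm.
set n := #|Jt|.
have U01 j : 0 <= U M j <= 1.
  apply/andP; split; first by apply: sumr_ge0 => x _; exact: rollin_ge0.
  apply: le_trans (rollin_le1 Iok Msm (pi M) h).
  by apply: sum_cond_le => x; exact: rollin_ge0.
have D2 i x a : Dd M' h i x a <= 2.
  case: M'm => M0 [M1 _]; case: Msm => Ms0 [Ms1 _].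
  apply: le_trans (_ : _ <= \sum_o (M' h i x a o + Mstar h i x a o)) _.
    apply: ler_sum => o _; apply: le_trans (ler_normB _ _) _.
    by rewrite !ger0_norm.
  by rewrite big_split /= M1 Ms1.
have W02 j : 0 <= W M' j <= 2 / (K Act)%:R.
  rewrite /W /Wb; case: pickP => [x _|_]; last first.
    by apply/andP; split => //; apply: divr_ge0.
  apply/andP; split; first by apply: mulr_ge0; [rewrite invr_ge0 ler0n | exact: Dd_ge0].
  by rewrite mulrC; apply: ler_wpM2r; [rewrite invr_ge0 ler0n | exact: D2].
pose c : R := 2 / (K Act)%:R.
have c0 : 0 <= c by apply: divr_ge0.
have SU : \sum_j U M j ^+ 2 <= n%:R.
  apply: le_trans (_ : _ <= \sum_(j < n) 1) _; last by rewrite sumr_const card_ord.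
  apply: ler_sum => j _; case/andP: (U01 j) => u0 u1; by rewrite expr_le1.
have SW : \sum_j W M' j ^+ 2 <= n%:R * c ^+ 2.
  apply: le_trans (_ : _ <= \sum_(j < n) c ^+ 2) _; last by rewrite sumr_const card_ord mulr_natl.
  apply: ler_sum => j _; case/andP: (W02 j) => w0 w1; rewrite !expr2; exact: ler_pM.
have nL : (n <= L O Act H pa)%N.
  rewrite /n card_Jt /L; apply: leq_sum => i _; rewrite add1n expnS.
  have := ltn_ord h; move: (#|O| ^ #|pa i|)%N => e hH.
  rewrite /K; have := leq_mul (leq_ltn_trans (leq0n _) hH) (leq_mul Op (leqnn (e * #|Act|))); lia.
apply: le_trans (ler_pM (sqrtr_ge0 _) (sqrtr_ge0 _)
   (_ : Num.sqrt _ <= Num.sqrt n%:R) (_ : Num.sqrt _ <= Num.sqrt (n%:R * c ^+ 2))) _.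
- by rewrite ler_sqrt.
- by rewrite ler_sqrt //; apply: mulr_ge0 => //; exact: sqr_ge0.
rewrite -sqrtrM // (_ : n%:R * (n%:R * c ^+ 2) = (n%:R * c) ^+ 2); last by ring.
rewrite sqrtr_sqr ger0_norm; last by apply: mulr_ge0.
have nLr : (n%:R : R) <= (L O Act H pa)%:R by rewrite ler_nat.
rewrite /c mulrCA; apply: ler_wpM2l => //.
by apply: ler_wpM2r => //; rewrite invr_ge0 ler0n.
Qed.

End MDP.

Theorem mainTheorem12 :
  exists c : nat,
  forall (R : rcfType) (O Act : finType) (H d : nat) (pa : 'I_d -> {set 'I_d})
         (Rs : 'I_H -> obs O d -> Act -> R) (Mstar : model R O Act H d)
         (d0 : obs O d -> R) (pi : model R O Act H d -> policy O Act H d),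
    (0 < #|Act|)%N ->
    reward_ok Rs ->
    init_ok d0 ->
    is_model pa Mstar ->
    greedy pa Rs pi ->
    forall h : 'I_H,
    exists beta : R,
      beta <= c%:R * ((L O Act H pa)%:R / (K Act)%:R) /\
      exists A : model R O Act H d -> model R O Act H d -> R,
        (forall M M', is_model pa M -> is_model pa M' ->
           (K Act)%:R^-1 * EB Rs Mstar d0 pi M M' h <= A M M' /\
           A M M' <= WF pa Mstar d0 pi M M' h) /\
        rank_le (is_model pa) A beta ((Lh O Act pa) %/ #|O|).
Proof.
exists 2%N => R O Act H d pa Rs Mstar d0 pi Kp Rok Iok Msm _ h.
exists (2%:R * ((L O Act H pa)%:R / (K Act)%:R)); split; first exact: lexx.
exists (@Afun R O Act H d Mstar d0 pi h); split; last exact: Afun_rank.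
move=> M M' Mm M'm; split.
  exact: (@EB_le R O Act H d pa Rs Mstar d0 pi h M M' Rok Iok Msm M'm).
exact: (@Afun_le_WF R O Act H d pa Mstar d0 pi M M' h M'm Msm).
Qed.
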